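(* Let $\lambda_a,\lambda_b\in\{1,2\}$ and let $u,t,v,w$ be integers such that: $u,t,vw$ are, in that order, three consecutive terms of $\langle u,t\rangle_{S_{\lambda_a,\lambda_b}}=\langle t,vw\rangle_{S_{3-\lambda_b,\lambda_a}}$, i.e. $(u,t)$ satisfies $S_{\lambda_a,\lambda_b}$ and $u\cdot vw=t^3+t^{\lambda_a}+1$; $v,t,uw$ are, in that order, three consecutive terms of a second 4-chain $\langle v,t\rangle_{S_{\lambda_a,\lambda_b}}=\langle t,uw\rangle_{S_{3-\lambda_b,\lambda_a}}$, i.e. $(v,t)$ satisfies $S_{\lambda_a,\lambda_b}$; $|t|$ is a prime; and $t\nmid(u-v)$. Then $(-w,t)$ satisfies $S_{\lambda_a,\lambda_b}$, so $-w,t,-uv$ are, in that order, three consecutive terms of a third 4-chain $\langle -w,t\rangle_{S_{\lambda_a,\lambda_b}}=\langle t,-uv\rangle_{S_{3-\lambda_b,\lambda_a}}$.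
   Context: For $\lambda_a,\lambda_b\in\{1,2\}$, a pair of integers $(x,y)$ satisfies the system $S_{\lambda_a,\lambda_b}$ if $x\mid y^3+y^{\lambda_a}+1$ and $y\mid x^3+x^{\lambda_b}+1$. For such a pair, $\langle x,y\rangle_{S_{\lambda_a,\lambda_b}}$ denotes the bi-infinite integer sequence $(u_n)$ with $u_0=x$, $u_1=y$ and $u_{n-1}u_{n+1}=u_n^3+u_n^{e_n}+1$ for all $n$, where $e_n$ has period 4 with $(e_0,e_1,e_2,e_3)=(\lambda_b,\lambda_a,3-\lambda_b,3-\lambda_a)$; sequences are identified up to shift and reversal of indices. ''$u,t,s$, in that order, are three consecutive terms of $\langle u,t\rangle_{S_{\lambda_a,\lambda_b}}$'' means $(u,t)$ satisfies $S_{\lambda_a,\lambda_b}$ and $us=t^3+t^{\lambda_a}+1$; in that case $(t,s)$ satisfies $S_{3-\lambda_b,\lambda_a}$ and the same chain is denoted $\langle t,s\rangle_{S_{3-\lambda_b,\lambda_a}}$. *)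

(* Defs.v *)
From Stdlib Require Import ZArith Znumtheory.
Open Scope Z_scope.

Definition satS (la lb x y : Z) : Prop :=
  (x | y ^ 3 + y ^ la + 1) /\ (y | x ^ 3 + x ^ lb + 1).

Definition consec3 (la lb u t s : Z) : Prop :=
  satS la lb u t /\ u * s = t ^ 3 + t ^ la + 1.

(* Main.v *)
Require Import Defs.
From Stdlib Require Import ZArith Znumtheory Lia.
Open Scope Z_scope.

Lemma pm (t a b : Z) : prime (Z.abs t) -> (t | a * b) -> (t | a) \/ (t | b).
Proof.
  intros Hp H. apply Z.divide_abs_l in H.
  destruct (prime_mult _ Hp a b H) as [H1|H1]; [left|right]; apply Z.divide_abs_l; auto.
Qed.

Lemma not1 (t : Z) : prime (Z.abs t) -> ~ (t | 1).
Proof.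
  intros Hp H. apply prime_ge_2 in Hp. apply Z.divide_1_r in H. lia.
Qed.

Lemma keygen (t u v w g X e fu fv fw : Z) :
  prime (Z.abs t) -> (t | fu) -> (t | fv) -> (t | u*v*w - 1) -> ~ (t | u - v) ->
  fu - fv = (u - v) * g ->
  fu = g * u + (1 - u*v*X) ->
  fw = (w - X) * e + (- g * X + (1 - u*v*X)) ->
  (t | fw).
Proof.
  intros Hp Hu Hv Hw Hd E1 E2 E3.
  assert (Hg : (t | g)).
  { assert (H : (t | (u - v) * g)) by (rewrite <- E1; apply Z.divide_sub_r; auto).
    destruct (pm _ _ _ Hp H); tauto. }
  assert (H1 : (t | 1 - u*v*X)).
  { replace (1 - u*v*X) with (fu - g*u) by lia.
    apply Z.divide_sub_r; auto. apply Z.divide_mul_l; auto. }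
  assert (Hq : ~ (t | u*v)).
  { intro H. apply (not1 _ Hp).
    replace 1 with ((1 - u*v*X) + u*v*X) by ring.
    apply Z.divide_add_r; auto. apply Z.divide_mul_l; auto. }
  assert (H2 : (t | w - X)).
  { assert (H : (t | u*v*(w - X))).
    { replace (u*v*(w-X)) with ((u*v*w - 1) + (1 - u*v*X)) by ring.
      apply Z.divide_add_r; auto. }
    destruct (pm _ _ _ Hp H); tauto. }
  rewrite E3. apply Z.divide_add_r.
  - apply Z.divide_mul_l; auto.
  - apply Z.divide_add_r; auto. apply Z.divide_mul_l. apply Z.divide_opp_r; auto.
Qed.

Theorem mainTheorem16 (la lb u t v w : Z) :
  (la = 1 \/ la = 2) -> (lb = 1 \/ lb = 2) ->
  consec3 la lb u t (v * w) ->
  consec3 la lb v t (u * w) ->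
  prime (Z.abs t) ->
  ~ (t | u - v) ->
  satS la lb (- w) t /\ consec3 la lb (- w) t (- (u * v)).
Proof.
  intros Hla Hlb [[_ Hu] E] [[_ Hv] _] Hp Hd.
  assert (Hw : (t | u*v*w - 1)).
  { replace (u*v*w - 1) with (t^3 + t^la) by (rewrite <- Z.mul_assoc, E; lia).
    destruct Hla; subst la; [exists (t^2 + 1) | exists (t^2 + t)]; ring. }
  assert (Hf : (t | (-w)^3 + (-w)^lb + 1)).
  { destruct Hlb; subst lb.
    - apply (keygen t u v w (u^2+u*v+v^2+1) (u+v) (-(w^2+w*(u+v)+(u+v)^2) - 1)
               (u^3+u^1+1) (v^3+v^1+1)); auto; ring.
    - apply (keygen t u v w (u^2+u*v+v^2+u+v) (1+u+v)
               (-(w^2+w*(1+u+v)+(1+u+v)^2) + w + (1+u+v))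
               (u^3+u^2+1) (v^3+v^2+1)); auto; ring. }
  assert (Hs : satS la lb (- w) t).
  { split; auto. exists (-(u*v)). rewrite <- E. ring. }
  split; auto. split; auto. rewrite <- E. ring.
Qed.
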